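(* Let $R$ be a commutative ring and let $a(x),b(x)\in R[[x]]$ be formal power series. For every integer $k\ge0$ with binary expansion $k=\sum_{j\ge0}d_j2^j$ ($d_j\in\{0,1\}$, almost all zero), set $$\dot f_k(x)=\prod_{j\ge0,\ d_j=1}\bigl(1-x^{2^j}\bigr),\qquad f_k(x)=\prod_{j\ge0,\ d_j=0}\bigl(1+x^{2^j}\bigr)\in R[[x]],\qquad \sigma_k=(-1)^{\sum_j d_j}.$$ Then $$a(x)\,b(x)=\sum_{k=0}^{\infty}f_k(x)\cdot\Bigl(\bigl(\sigma_k\,f_k(x)\,x^k\bigr)\odot\bigl(\dot f_k(x)\,a(x)\bigr)\odot\bigl(\dot f_k(x)\,b(x)\bigr)\Bigr).$$
   Context: For formal power series $P=\sum_i p_ix^i$ and $Q=\sum_i q_ix^i$, the termwise product is $P\odot Q=\sum_i p_iq_ix^i$. The infinite product defining $f_k$ converges in $R[[x]]$ (for $k=0$ it equals $\frac{1}{1-x}=\sum_{i\ge0}x^i$). In the formula, ordinary products are computed first, then the termwise products, and the result is multiplied (ordinary product) by $f_k(x)$; the infinite sum converges formally since the $k$-th summand has order at least $k$. *)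

(* Defs.v *)
From mathcomp Require Import all_boot all_order all_algebra.
Set Implicit Arguments. Unset Strict Implicit. Unset Printing Implicit Defensive.
Import GRing.Theory.
Local Open Scope ring_scope.

Section FPS.
Variable R : comPzRingType.

Definition fps := nat -> R.

Definition fps_mul (a b : fps) : fps :=
  fun n => \sum_(i < n.+1) a i * b (n - i)%N.
Definition fps_had (a b : fps) : fps := fun n => a n * b n.
Definition fps_one : fps := fun n => (n == 0)%:R.
Definition fps_Xn (m : nat) : fps := fun n => (n == m)%:R.
Definition fps_scale (c : R) (a : fps) : fps := fun n => c * a n.
Definition fps_1pXn (m : nat) : fps := fun n => (n == 0)%:R + (n == m)%:R.
Definition fps_1mXn (m : nat) : fps := fun n => (n == 0)%:R - (n == m)%:R.
Definition fps_prod (s : seq fps) : fps := foldr fps_mul fps_one s.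

Definition bit (k j : nat) : bool := odd (k %/ 2 ^ j).

(* \dot f_k = prod_{j, d_j = 1} (1 - x^(2^j)); all d_j with j > k vanish *)
Definition fdot (k : nat) : fps :=
  fps_prod [seq fps_1mXn (2 ^ j) | j <- iota 0 k.+1 & bit k j].

(* f_k = prod_{j, d_j = 0} (1 + x^(2^j)) (infinite product).  Its n-th
   coefficient is the (stable) n-th coefficient of the partial products:
   factors with j > n are = 1 modulo x^(n+1), so the partial product over
   j <= n already has the limiting n-th coefficient. *)
Definition f (k : nat) : fps :=
  fun n => fps_prod [seq fps_1pXn (2 ^ j) | j <- iota 0 n.+1 & ~~ bit k j] n.

Definition sigma (k : nat) : R :=
  (-1) ^+ (count (bit k) (iota 0 k.+1)).

(* formal (coefficientwise, x-adic) convergence of an infinite sum: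
   every coefficient of the partial sums is eventually equal to that of s *)
Definition fps_sums (T : nat -> fps) (s : fps) : Prop :=
  forall n, exists N, forall M, (N <= M)%N -> \sum_(k < M) T k n = s n.

Definition summand (a b : fps) (k : nat) : fps :=
  fps_mul (f k)
    (fps_had (fps_had (fps_scale (sigma k) (fps_mul (f k) (fps_Xn k)))
                      (fps_mul (fdot k) a))
             (fps_mul (fdot k) b)).

End FPS.

(* Main.v *)
Require Import Defs.
From mathcomp Require Import all_boot all_order all_algebra.
From mathcomp Require Import zify ring.
From Stdlib Require Import FunctionalExtensionality.
Set Implicit Arguments. Unset Strict Implicit. Unset Printing Implicit Defensive.
Local Open Scope ring_scope.
Import GRing.Theory.

Section Aux.
Variable R : comPzRingType.
Implicit Types (a b p q : fps R).

Lemma sum_delta (F : nat -> R) n (e : nat) :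
  \sum_(i < n) ((i : nat) == e)%:R * F i = if (e < n)%N then F e else 0.
Proof.
elim: n => [|n IH]; first by rewrite big_ord0.
rewrite big_ord_recr /= IH.
case: (ltngtP e n) => H.
- by rewrite mul0r addr0 (ltn_trans H (ltnSn n)).
- have -> : (e < n.+1)%N = false by lia.
  by rewrite mul0r addr0.
- by rewrite H ltnSn mul1r add0r.
Qed.

Lemma split2 (F : nat -> R) m :
  \sum_(i < m.*2) F i = \sum_(i < m) (F i.*2 + F i.*2.+1).
Proof.
elim: m => [|m IH]; first by rewrite !big_ord0.
by rewrite doubleS !big_ord_recr /= IH addrA.
Qed.

Lemma split_odd (F : nat -> R) m :
  \sum_(i < (m.*2).+1) F i = \sum_(i < m.+1) F i.*2 + \sum_(i < m) F i.*2.+1.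
Proof.
by rewrite big_ord_recr /= split2 big_split /= big_ord_recr /= addrAC.
Qed.

Lemma split_even (F : nat -> R) m :
  \sum_(i < (m.*2).+2) F i = \sum_(i < m.+1) F i.*2 + \sum_(i < m.+1) F i.*2.+1.
Proof.
by rewrite -doubleS split2 big_split.
Qed.

Lemma par n : exists m, n = m.*2 \/ n = m.*2.+1.
Proof. exists n./2; case: (boolP (odd n)) => H; [right|left]; lia. Qed.

Definition sub2 p : fps R := fun n => if odd n then 0 else p n./2.
Definition ev a : fps R := fun i => a i.*2.
Definition od a : fps R := fun i => a i.*2.+1.

Lemma mul_1pX e q m :
  fps_mul (fps_1pXn R e) q m = q m + (if (e <= m)%N then q (m - e)%N else 0).
Proof.
rewrite /fps_mul /fps_1pXn.
under eq_bigr do rewrite mulrDl.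
rewrite big_split /=.
rewrite (sum_delta (fun i => q (m - i)%N)) (sum_delta (fun i => q (m - i)%N)) /= subn0.
by [].
Qed.

Lemma mul_1mX e q m :
  fps_mul (fps_1mXn R e) q m = q m - (if (e <= m)%N then q (m - e)%N else 0).
Proof.
rewrite /fps_mul /fps_1mXn.
under eq_bigr do rewrite mulrBl.
rewrite sumrB /=.
rewrite (sum_delta (fun i => q (m - i)%N)) (sum_delta (fun i => q (m - i)%N)) /= subn0.
by [].
Qed.

Lemma sub2_mul p q : sub2 (fps_mul p q) = fps_mul (sub2 p) (sub2 q).
Proof.
apply: functional_extensionality => n.
have [m [->|->]] := par n.
- rewrite /fps_mul (split_odd (fun i => sub2 p i * sub2 q (m.*2 - i)%N)).
  rewrite /sub2 odd_double half_double.
  rewrite [X in _ = _ + X]big1 ?addr0; last first.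
    by move=> [i /= hi] _; rewrite ?oddS odd_double /= mul0r.
  apply: eq_bigr => [[i /= hi]] _.
  rewrite odd_double half_double.
  have -> : (m.*2 - i.*2 = (m - i).*2)%N by lia.
  by rewrite odd_double half_double.
- rewrite /fps_mul (split_even (fun i => sub2 p i * sub2 q (m.*2.+1 - i)%N)).
  rewrite /sub2 /= odd_double /=.
  rewrite !big1 ?addr0 //.
  + move=> [i /= hi] _; rewrite ?oddS odd_double /= mul0r //.
  + move=> [i /= hi] _; rewrite odd_double /=.
    have -> : ((m.*2).+1 - i.*2 = ((m - i).*2).+1)%N by lia.
    by rewrite ?oddS odd_double /= mulr0.
Qed.

Lemma sub2_one : sub2 (fps_one R) = fps_one R.
Proof.
apply: functional_extensionality => n; rewrite /sub2 /fps_one.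
case: (boolP (odd n)) => H.
- by have -> : (n == 0)%N = false by apply/eqP; lia.
- congr (_%:R); apply/eqP/eqP; lia.
Qed.

Lemma sub2_1pX e : sub2 (fps_1pXn R e) = fps_1pXn R e.*2.
Proof.
apply: functional_extensionality => n; rewrite /sub2 /fps_1pXn.
case: (boolP (odd n)) => H.
- have -> : (n == 0)%N = false by apply/eqP; lia.
  have -> : (n == e.*2)%N = false by apply/eqP; lia.
  by rewrite addr0.
- have -> : (n./2 == 0)%N = (n == 0)%N by apply/idP/idP => /eqP ?; apply/eqP; lia.
  have -> : (n./2 == e)%N = (n == e.*2)%N by apply/idP/idP => /eqP ?; apply/eqP; lia.
  by [].
Qed.

Lemma sub2_1mX e : sub2 (fps_1mXn R e) = fps_1mXn R e.*2.
Proof.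
apply: functional_extensionality => n; rewrite /sub2 /fps_1mXn.
case: (boolP (odd n)) => H.
- have -> : (n == 0)%N = false by apply/eqP; lia.
  have -> : (n == e.*2)%N = false by apply/eqP; lia.
  by rewrite subr0.
- have -> : (n./2 == 0)%N = (n == 0)%N by apply/idP/idP => /eqP ?; apply/eqP; lia.
  have -> : (n./2 == e)%N = (n == e.*2)%N by apply/idP/idP => /eqP ?; apply/eqP; lia.
  by [].
Qed.

Lemma prod_sub2 (s : seq (fps R)) : fps_prod (map sub2 s) = sub2 (fps_prod s).
Proof.
elim: s => [|x s IH]; first by rewrite /fps_prod /= sub2_one.
change (fps_mul (sub2 x) (fps_prod (map sub2 s)) = sub2 (fps_mul x (fps_prod s))).
by rewrite IH -sub2_mul.
Qed.


Lemma bit_e0 k : bit k.*2 0 = false.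
Proof. by rewrite /bit expn0 divn1 odd_double. Qed.
Lemma bit_o0 k : bit k.*2.+1 0 = true.
Proof. by rewrite /bit expn0 divn1 /= odd_double. Qed.
Lemma bit_eS k j : bit k.*2 j.+1 = bit k j.
Proof. rewrite /bit expnS divnMA; congr (odd (_ %/ _)); lia. Qed.
Lemma bit_oS k j : bit k.*2.+1 j.+1 = bit k j.
Proof. rewrite /bit expnS divnMA; congr (odd (_ %/ _)); lia. Qed.

Lemma bit_big k j : (k <= j)%N -> bit k j = false.
Proof.
move=> H; rewrite /bit divn_small //.
apply: leq_trans (ltn_expl k (ltnSn 1)) _; by rewrite leq_exp2l.
Qed.

Lemma filt_stab k n : (k <= n)%N -> filter (bit k) (iota 0 n) = filter (bit k) (iota 0 k).
Proof.
move=> H; rewrite -(subnKC H) iotaD filter_cat add0n.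
have -> : filter (bit k) (iota k (n - k)) = [::].
  rewrite (@eq_in_filter _ _ pred0) ?filter_pred0 //.
  by move=> j; rewrite mem_iota => /andP[hj _]; rewrite bit_big.
by rewrite cats0.
Qed.

Lemma iota_shift n : iota 0 n.+1 = 0%N :: map succn (iota 0 n).
Proof. by rewrite /= (iotaDl 1 0). Qed.

Lemma list_shift (P Q : pred nat) (G : nat -> fps R) n :
  (forall j, P j.+1 = Q j) ->
  [seq G (2^j)%N | j <- iota 0 n.+1 & P j] =
  (if P 0%N then [:: G 1%N] else [::]) ++ [seq G ((2^j).*2)%N | j <- iota 0 n & Q j].
Proof.
move=> PQ; rewrite iota_shift /=.
have E : [seq G (2 ^ j)%N | j <- [seq x <- [seq i.+1 | i <- iota 0 n] | P x]]
   = [seq G ((2^j).*2)%N | j <- iota 0 n & Q j].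
  rewrite filter_map -map_comp (@eq_filter _ _ Q) //.
  by apply: eq_map => j /=; rewrite expnS mul2n.
by case: (P 0%N); rewrite /= E.
Qed.

Lemma fdot_even k : fdot R k.*2 = sub2 (fdot R k).
Proof.
rewrite /fdot (filt_stab (leqnSn k)) (@list_shift _ (bit k)); last by move=> j; rewrite bit_eS.
rewrite bit_e0 cat0s filt_stab; last by lia.
rewrite -prod_sub2 -map_comp.
by congr fps_prod; apply: eq_map => j /=; rewrite sub2_1mX.
Qed.

Lemma fdot_odd k : fdot R k.*2.+1 = fps_mul (fps_1mXn R 1) (sub2 (fdot R k)).
Proof.
rewrite /fdot (filt_stab (leqnSn k)) (@list_shift _ (bit k)); last by move=> j; rewrite bit_oS.
rewrite bit_o0 cat1s filt_stab; last by lia.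
rewrite -prod_sub2 -map_comp.
have -> : [seq fps_1mXn R (2 ^ j).*2 | j <- iota 0 k & bit k j] =
   [seq (sub2 \o (fun j => fps_1mXn R (2 ^ j))) j | j <- iota 0 k & bit k j].
  by apply: eq_map => j /=; rewrite sub2_1mX.
by [].
Qed.

Lemma cntc (P : pred nat) x s : count P (x :: s) = (P x + count P s)%N.
Proof. by []. Qed.

Lemma sigma_even k : sigma R k.*2 = sigma R k.
Proof.
rewrite /sigma -[in RHS]size_filter (filt_stab (leqnSn k)) iota_shift cntc bit_e0 add0n count_map.
rewrite (@eq_count _ _ (bit k)); last by move=> j /=; rewrite bit_eS.
by rewrite -!size_filter (@filt_stab k k.*2); last by lia.
Qed.

Lemma sigma_odd k : sigma R k.*2.+1 = - sigma R k.
Proof.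
rewrite /sigma -[in RHS]size_filter (filt_stab (leqnSn k)) iota_shift cntc bit_o0 add1n count_map.
rewrite (@eq_count _ _ (bit k)); last by move=> j /=; rewrite bit_oS.
by rewrite -!size_filter (@filt_stab k k.*2.+1) ?exprS ?mulN1r; last by lia.
Qed.


Definition pf (P : pred nat) n : fps R :=
  fps_prod [seq fps_1pXn R (2^j) | j <- iota 0 n & P j].

Lemma foldr_agree m (s : seq (fps R)) q q' :
  (forall i, (i <= m)%N -> q i = q' i) ->
  forall i, (i <= m)%N -> foldr (@fps_mul R) q s i = foldr (@fps_mul R) q' s i.
Proof.
move=> Hq; elim: s => [|x s IH] i hi /=; first exact: Hq.
rewrite /fps_mul; apply: eq_bigr => [[j hj]] _ /=; rewrite IH //; lia.
Qed.

Lemma prod_one_agree m (s : seq nat) :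
  (forall j, j \in s -> (m < 2^j)%N) ->
  forall i, (i <= m)%N -> fps_prod [seq fps_1pXn R (2^j) | j <- s] i = fps_one R i.
Proof.
elim: s => [|x s IH] H i hi //=.
change (fps_mul (fps_1pXn R (2^x)) (fps_prod [seq fps_1pXn R (2^j) | j <- s]) i = fps_one R i).
rewrite mul_1pX IH //; last by move=> j js; apply: H; rewrite inE js orbT.
have := H x (mem_head _ _) => Hx.
have -> : (2 ^ x <= i)%N = false by lia.
by rewrite addr0.
Qed.

Lemma pf_stab_le P n1 n2 m : (n1 <= n2)%N -> (m < 2^n1)%N -> pf P n2 m = pf P n1 m.
Proof.
move=> H12 Hm; rewrite /pf -(subnKC H12) iotaD filter_cat map_cat /fps_prod foldr_cat.
apply: (foldr_agree (m := m)) => // i hi.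
apply: (prod_one_agree (m := m)) => // j; rewrite mem_filter mem_iota => /andP[_ /andP[hj _]].
apply: leq_trans Hm _; by rewrite leq_exp2l.
Qed.

Lemma pf_stab P n1 n2 m : (m < 2^n1)%N -> (m < 2^n2)%N -> pf P n1 m = pf P n2 m.
Proof.
move=> h1 h2; case: (leqP n1 n2) => H.
- by rewrite (pf_stab_le _ H).
- by rewrite (pf_stab_le _ (ltnW H)).
Qed.

Lemma pf_shift (P Q : pred nat) n : (forall j, P j.+1 = Q j) ->
  pf P n.+1 = if P 0%N then fps_mul (fps_1pXn R 1) (sub2 (pf Q n)) else sub2 (pf Q n).
Proof.
move=> PQ; rewrite /pf (list_shift (fps_1pXn R) n PQ).
have E : [seq fps_1pXn R (2 ^ j).*2 | j <- iota 0 n & Q j] =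
   map sub2 [seq fps_1pXn R (2 ^ j) | j <- iota 0 n & Q j].
  by rewrite -map_comp; apply: eq_map => j /=; rewrite sub2_1pX.
case: (P 0%N); rewrite ?cat1s ?cat0s E -prod_sub2 //.
Qed.

Lemma half_lt1 m : (m./2 < 2^m)%N.
Proof. apply: (leq_ltn_trans _ (ltn_expl m (ltnSn 1))); lia. Qed.
Lemma half_lt2 m : (m./2 < 2^(m./2).+1)%N.
Proof. apply: (ltn_trans (ltn_expl _ (ltnSn 1))); by rewrite ltn_exp2l. Qed.

Lemma f_pf k m : f R k m = pf (fun j => ~~ bit k j) m.+1 m.
Proof. by []. Qed.

Lemma mul1pX_sub2 (X : fps R) m : fps_mul (fps_1pXn R 1) (sub2 X) m = X m./2.
Proof.
rewrite mul_1pX /sub2.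
have [t [->|->]] := par m.
- rewrite odd_double half_double; case: t => [|t]; first by rewrite addr0.
  have -> : (t.+1.*2 - 1 = (t.*2).+1)%N by lia.
  by rewrite oddS odd_double /= addr0.
- rewrite oddS odd_double /= add0r.
  have -> : (t.*2.+1 - 1 = t.*2)%N by lia.
  by rewrite odd_double half_double uphalf_double.
Qed.

Lemma f_even k m : f R k.*2 m = f R k m./2.
Proof.
rewrite !f_pf (@pf_shift _ (fun j => ~~ bit k j)); last by move=> j; rewrite bit_eS.
rewrite bit_e0 /= mul1pX_sub2.
by rewrite (pf_stab _ (half_lt1 m) (half_lt2 m)).
Qed.

Lemma f_odd k m : f R k.*2.+1 m = if odd m then 0 else f R k m./2.
Proof.
rewrite !f_pf (@pf_shift _ (fun j => ~~ bit k j)); last by move=> j; rewrite bit_oS.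
rewrite bit_o0 /= /sub2.
case: ifP => // _.
by rewrite (pf_stab _ (half_lt1 m) (half_lt2 m)).
Qed.

Lemma f_zero k : f R k 0 = 1.
Proof.
rewrite f_pf /pf /=; case: (~~ bit k 0) => //=.
change (fps_mul (fps_1pXn R (2^0)) (fps_one R) 0 = 1).
by rewrite mul_1pX /fps_one /= addr0.
Qed.


Definition g k : fps R := fps_mul (f R k) (fps_Xn R k).
Definition dd a : fps R := fun i => od a i - ev a i.
Definition H a b k n := sigma R k * g k n * fps_mul (fdot R k) a n * fps_mul (fdot R k) b n.

Lemma summandE a b k N : summand a b k N = \sum_(i < N.+1) f R k i * H a b k (N - i)%N.
Proof. by []. Qed.

Lemma hS m : ((m.*2).+1./2 = m)%N.
Proof. lia. Qed.

Lemma g_coef k n : g k n = if (k <= n)%N then f R k (n - k)%N else 0.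
Proof.
rewrite /g /fps_mul /fps_Xn.
case: ifP => hk.
- rewrite (eq_bigr (fun i : 'I_n.+1 => ((i : nat) == (n - k)%N)%:R * f R k i)).
    by rewrite sum_delta; have -> : (n - k < n.+1)%N by lia.
  move=> [i /= hi] _; rewrite mulrC; congr (_%:R * _).
  by case: eqP => h1; case: eqP => h2 //; exfalso; lia.
- rewrite big1 // => [[i /= hi]] _.
  have -> : (n - i == k)%N = false by apply/eqP; lia.
  by rewrite mulr0.
Qed.

Lemma g_even k n : g k.*2 n = g k n./2.
Proof.
rewrite !g_coef f_even.
have -> : (k.*2 <= n)%N = (k <= n./2)%N by case: leqP => h1; case: leqP => h2 //; exfalso; lia.
case: ifP => // _; congr (f R k _); lia.
Qed.

Lemma g_odd k n : g k.*2.+1 n = if odd n then g k n./2 else 0.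
Proof.
rewrite !g_coef f_odd.
have [t [->|->]] := par n.
- rewrite odd_double; case: ifP => // h.
  have -> : (t.*2 - k.*2.+1 = (t - k.+1).*2.+1)%N by lia.
  by rewrite oddS odd_double.
- rewrite !hS oddS odd_double /=.
  have -> : (t.*2.+1 - k.*2.+1 = (t - k).*2)%N by lia.
  rewrite odd_double half_double /=.
  have -> : (k.*2 < t.*2.+1)%N = (k <= t)%N by case: leqP => h1; case: leqP => h2 //; exfalso; lia.
  by [].
Qed.

Lemma mul_sub2_e p a m : fps_mul (sub2 p) a m.*2 = fps_mul p (ev a) m.
Proof.
rewrite /fps_mul (split_odd (fun i => sub2 p i * a (m.*2 - i)%N)).
rewrite [X in _ + X]big1 ?addr0; last first.
  by move=> [i /= hi] _; rewrite /sub2 oddS odd_double /= mul0r.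
apply: eq_bigr => [[i /= hi]] _.
rewrite /sub2 odd_double half_double /ev; congr (_ * a _); lia.
Qed.

Lemma mul_sub2_o p a m : fps_mul (sub2 p) a m.*2.+1 = fps_mul p (od a) m.
Proof.
rewrite /fps_mul (split_even (fun i => sub2 p i * a (m.*2.+1 - i)%N)).
rewrite [X in _ + X]big1 ?addr0; last first.
  by move=> [i /= hi] _; rewrite /sub2 oddS odd_double /= mul0r.
apply: eq_bigr => [[i /= hi]] _.
rewrite /sub2 odd_double half_double /od; congr (_ * a _); lia.
Qed.

Lemma c_e (X : fps R) j : fps_mul (fps_1mXn R 1) (sub2 X) j.*2 = X j.
Proof.
rewrite mul_1mX /sub2 odd_double half_double; case: j => [|j]; first by rewrite subr0.
have -> : (j.+1.*2 - 1 = (j.*2).+1)%N by lia.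
by rewrite oddS odd_double /= subr0.
Qed.

Lemma c_o (X : fps R) j : fps_mul (fps_1mXn R 1) (sub2 X) j.*2.+1 = - X j.
Proof.
rewrite mul_1mX /sub2 oddS odd_double /= sub0r.
have -> : (j.*2.+1 - 1 = j.*2)%N by lia.
by rewrite odd_double half_double.
Qed.

Lemma D_e0 k a m : fps_mul (fdot R k.*2) a m.*2 = fps_mul (fdot R k) (ev a) m.
Proof. by rewrite fdot_even mul_sub2_e. Qed.

Lemma D_e1 k a m : fps_mul (fdot R k.*2) a m.*2.+1 = fps_mul (fdot R k) (od a) m.
Proof. by rewrite fdot_even mul_sub2_o. Qed.

Lemma D_o1 k a m : fps_mul (fdot R k.*2.+1) a m.*2.+1 = fps_mul (fdot R k) (dd a) m.
Proof.
rewrite fdot_odd.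
set Y := fps_mul (fps_1mXn R 1) (sub2 (fdot R k)).
rewrite /fps_mul (split_even (fun i => Y i * a (m.*2.+1 - i)%N)) /dd.
under [in RHS]eq_bigr do rewrite mulrBr.
rewrite sumrB; congr (_ + _).
- apply: eq_bigr => [[i /= hi]] _; rewrite /Y c_e /od; congr (_ * a _); lia.
- rewrite -sumrN; apply: eq_bigr => [[i /= hi]] _; rewrite /Y c_o mulNr /ev; congr (- (_ * a _)); lia.
Qed.

Lemma H_ee a b k m : H a b k.*2 m.*2 = H (ev a) (ev b) k m.
Proof. by rewrite /H sigma_even g_even half_double !D_e0. Qed.

Lemma H_eo a b k m : H a b k.*2 m.*2.+1 = H (od a) (od b) k m.
Proof. by rewrite /H sigma_even g_even hS !D_e1. Qed.

Lemma H_oe a b k m : H a b k.*2.+1 m.*2 = 0.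
Proof. by rewrite /H g_odd odd_double mulr0 !mul0r. Qed.

Lemma H_oo a b k m : H a b k.*2.+1 m.*2.+1 = - H (dd a) (dd b) k m.
Proof. by rewrite /H sigma_odd g_odd oddS odd_double hS /= !D_o1 !mulNr. Qed.


Lemma S_ee a b k M : summand a b k.*2 (M.+1).*2 =
  summand (ev a) (ev b) k M.+1 + summand (od a) (od b) k M.
Proof.
rewrite !summandE (split_odd (fun i => f R k.*2 i * H a b k.*2 ((M.+1).*2 - i)%N)).
congr (_ + _); apply: eq_bigr => [[i /= hi]] _.
- rewrite f_even half_double.
  have -> : ((M.+1).*2 - i.*2 = (M.+1 - i).*2)%N by lia.
  by rewrite H_ee.
- rewrite f_even hS.
  have -> : ((M.+1).*2 - i.*2.+1 = (M - i).*2.+1)%N by lia.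
  by rewrite H_eo.
Qed.

Lemma S_eo a b k M : summand a b k.*2 M.*2.+1 =
  summand (od a) (od b) k M + summand (ev a) (ev b) k M.
Proof.
rewrite !summandE (split_even (fun i => f R k.*2 i * H a b k.*2 (M.*2.+1 - i)%N)).
congr (_ + _); apply: eq_bigr => [[i /= hi]] _.
- rewrite f_even half_double.
  have -> : (M.*2.+1 - i.*2 = (M - i).*2.+1)%N by lia.
  by rewrite H_eo.
- rewrite f_even hS.
  have -> : (M.*2.+1 - i.*2.+1 = (M - i).*2)%N by lia.
  by rewrite H_ee.
Qed.

Lemma S_oe a b k M : summand a b k.*2.+1 M.*2 = 0.
Proof.
rewrite !summandE (split_odd (fun i => f R k.*2.+1 i * H a b k.*2.+1 (M.*2 - i)%N)).
rewrite [X in X + _]big1; last first.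
  move=> [i /= hi] _.
  have -> : (M.*2 - i.*2 = (M - i).*2)%N by lia.
  by rewrite H_oe mulr0.
rewrite add0r big1 // => [[i /= hi]] _.
by rewrite f_odd oddS odd_double /= mul0r.
Qed.

Lemma S_oo a b k M : summand a b k.*2.+1 M.*2.+1 = - summand (dd a) (dd b) k M.
Proof.
rewrite !summandE (split_even (fun i => f R k.*2.+1 i * H a b k.*2.+1 (M.*2.+1 - i)%N)).
rewrite [X in _ + X]big1 ?addr0; last first.
  by move=> [i /= hi] _; rewrite f_odd oddS odd_double /= mul0r.
rewrite -sumrN; apply: eq_bigr => [[i /= hi]] _.
rewrite f_odd odd_double half_double.
have -> : (M.*2.+1 - i.*2 = (M - i).*2.+1)%N by lia.
by rewrite H_oo mulrN.
Qed.

Lemma summand_big a b k N : (N < k)%N -> summand a b k N = 0.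
Proof.
move=> hk; rewrite summandE big1 // => [[i /= hi]] _.
rewrite /H g_coef.
have -> : (k <= N - i)%N = false by lia.
by rewrite mulr0 !mul0r mulr0.
Qed.

Definition Ssum a b N := \sum_(k < N.+1) summand a b k N.

Lemma sum_ext a b N K : (N < K)%N -> \sum_(k < K) summand a b k N = Ssum a b N.
Proof.
move=> hK; rewrite -(subnKC hK); move: (K - N.+1)%N => d.
elim: d => [|d IH]; first by rewrite addn0.
rewrite addnS big_ord_recr /= IH summand_big ?addr0 //; lia.
Qed.

Lemma mul_even a b M : fps_mul a b (M.+1).*2 =
  fps_mul (ev a) (ev b) M.+1 + fps_mul (od a) (od b) M.
Proof.
rewrite /fps_mul (split_odd (fun i => a i * b ((M.+1).*2 - i)%N)).
congr (_ + _); apply: eq_bigr => [[i /= hi]] _; rewrite /ev /od; congr (_ * b _); lia.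
Qed.

Lemma mul_odd a b M : fps_mul a b M.*2.+1 =
  fps_mul (od a) (od b) M + fps_mul (ev a) (ev b) M - fps_mul (dd a) (dd b) M.
Proof.
rewrite /fps_mul (split_even (fun i => a i * b (M.*2.+1 - i)%N)).
rewrite -!big_split -sumrB /=; apply: eq_bigr => [[i /= hi]] _.
rewrite /dd /ev /od.
have -> : (M.*2.+1 - i.*2 = (M - i).*2.+1)%N by lia.
have -> : (M.*2.+1 - i.*2.+1 = (M - i).*2)%N by lia.
ring.
Qed.

Lemma base a b : Ssum a b 0 = fps_mul a b 0.
Proof.
rewrite /Ssum big_ord1 summandE big_ord1 /= f_zero mul1r /H g_coef /= subnn f_zero.
have -> : sigma R 0 = 1 by rewrite /sigma /= expr0.
have -> : fdot R 0 = fps_one R by [].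
by rewrite /fps_mul !big_ord1 /fps_one /= !mul1r.
Qed.

Lemma main N : forall a b, Ssum a b N = fps_mul a b N.
Proof.
elim/ltn_ind: N => N IH a b.
have [M [EN|EN]] := par N; rewrite EN.
- case: M EN => [|M] EN; first exact: base.
  rewrite -(@sum_ext a b _ (M.+2).*2); last by lia.
  rewrite (split2 (fun k => summand a b k _)).
  under eq_bigr do rewrite S_ee S_oe addr0.
  rewrite big_split /= (@sum_ext _ _ M.+1 M.+2) // (@sum_ext _ _ M M.+2) //.
  rewrite !IH; [|lia|lia].
  by rewrite mul_even.
- rewrite -(@sum_ext a b _ (M.+1).*2); last by lia.
  rewrite (split2 (fun k => summand a b k _)).
  under eq_bigr do rewrite S_eo S_oo.
  rewrite big_split /= sumrN big_split /=.
  rewrite !(@sum_ext _ _ M M.+1) // !IH; [|lia|lia|lia].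
  by rewrite mul_odd.
Qed.

End Aux.

Unset Implicit Arguments. Set Strict Implicit. Set Printing Implicit Defensive.

Theorem mainTheorem4 (R : comPzRingType) (a b : fps R) :
  fps_sums (summand a b) (fps_mul a b).
Proof.
move=> n; exists n.+1 => M hM.
by rewrite sum_ext // main.
Qed.
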